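(* Let $\varrho_\pm,p_\pm>0$ with $\varrho_-<\varrho_+$, and fix $\varrho_1>\varrho_+$. For $v_\pm\in\mathbb{R}$ set $u=v_--v_+$, $R=\varrho_--\varrho_+$, $A=\varrho_-v_--\varrho_+v_+$, $B=\varrho_-\varrho_+u^2-(\varrho_+-\varrho_-)(p_+-p_-)$, and, whenever $B>0$, $$\mu_0=\frac AR-\frac1R\sqrt{B\frac{\varrho_1-\varrho_+}{\varrho_1-\varrho_-}},\qquad \mu_1=\frac AR-\frac1R\sqrt{B\frac{\varrho_1-\varrho_-}{\varrho_1-\varrho_+}}.$$ Then for $u$ sufficiently large (depending only on $\varrho_\pm,p_\pm,\varrho_1$) one has $B>0$ and $$v_--\mu_0>0\qquad\text{and}\qquad \mu_1-v_+>0.$$ *)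

(* Defs.v *)
From Stdlib Require Import Reals.
Open Scope R_scope.

Definition uu (vm vp : R) : R := vm - vp.
Definition RR (rm rp : R) : R := rm - rp.
Definition AA (rm rp vm vp : R) : R := rm * vm - rp * vp.
Definition BB (rm rp pm pp vm vp : R) : R :=
  rm * rp * (uu vm vp)^2 - (rp - rm) * (pp - pm).

Definition mu0 (rm rp pm pp r1 vm vp : R) : R :=
  AA rm rp vm vp / RR rm rp
  - / RR rm rp * sqrt (BB rm rp pm pp vm vp * ((r1 - rp) / (r1 - rm))).

Definition mu1 (rm rp pm pp r1 vm vp : R) : R :=
  AA rm rp vm vp / RR rm rp
  - / RR rm rp * sqrt (BB rm rp pm pp vm vp * ((r1 - rm) / (r1 - rp))).

(* Main.v *)
Require Import Defs.
From Stdlib Require Import Reals Lra.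
Open Scope R_scope.

Lemma sqrt_lt_helper x y : 0 < y -> x < y * y -> sqrt x < y.
Proof.
  intros Hy Hx. destruct (Rle_dec x 0) as [H|H].
  - rewrite sqrt_neg_0; lra.
  - rewrite <- (sqrt_square y) by lra. apply sqrt_lt_1; nra.
Qed.

Lemma sqrt_gt_helper x y : 0 <= y -> y * y < x -> y < sqrt x.
Proof.
  intros Hy Hx. rewrite <- (sqrt_square y) by lra. apply sqrt_lt_1; nra.
Qed.

Theorem lemma6p1 (rm rp pm pp r1 : R) :
  0 < rm -> 0 < rp -> 0 < pm -> 0 < pp -> rm < rp -> rp < r1 ->
  exists U : R, forall vm vp : R, U < uu vm vp ->
    0 < BB rm rp pm pp vm vp /\
    0 < vm - mu0 rm rp pm pp r1 vm vp /\
    0 < mu1 rm rp pm pp r1 vm vp - vp.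
Proof.
  intros Ha Hb Hpm Hpp Hab Hb1.
  set (k0 := (r1 - rp) / (r1 - rm)).
  set (k1 := (r1 - rm) / (r1 - rp)).
  assert (Hk0 : 0 < k0 < 1).
  { unfold k0; split. apply Rdiv_lt_0_compat; lra.
    apply (Rmult_lt_reg_r (r1 - rm)); [lra|]. field_simplify; lra. }
  assert (Hk1 : 1 < k1).
  { unfold k1. apply (Rmult_lt_reg_r (r1 - rp)); [lra|]. field_simplify; lra. }
  set (D := (rp - rm) * Rabs (pp - pm)).
  assert (HD : 0 <= D) by (unfold D; apply Rmult_le_pos; [lra|apply Rabs_pos]).
  set (c1 := rm * rp). set (c2 := rp * rp - k0 * rm * rp). set (c3 := k1 * rm * rp - rm * rm).
  assert (Hc1 : 0 < c1) by (unfold c1; nra).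
  assert (Hc2 : 0 < c2).
  { unfold c2. assert (k0 * rm < rm) by nra.
    replace (rp * rp - k0 * rm * rp) with (rp * (rp - k0 * rm)) by ring.
    apply Rmult_lt_0_compat; lra. }
  assert (Hc3 : 0 < c3).
  { unfold c3. assert (rp < k1 * rp) by nra.
    replace (k1 * rm * rp - rm * rm) with (rm * (k1 * rp - rm)) by ring.
    apply Rmult_lt_0_compat; lra. }
  exists (1 + D / c1 + D / c2 + k1 * D / c3).
  intros vm vp Hu.
  set (u := uu vm vp) in *.
  assert (HD1 : 0 <= D / c1) by (unfold Rdiv; apply Rmult_le_pos; [lra|left; apply Rinv_0_lt_compat; lra]).
  assert (HD2 : 0 <= D / c2) by (unfold Rdiv; apply Rmult_le_pos; [lra|left; apply Rinv_0_lt_compat; lra]).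
  assert (HD3 : 0 <= k1 * D / c3) by (unfold Rdiv; apply Rmult_le_pos; [nra|left; apply Rinv_0_lt_compat; lra]).
  assert (Hu1 : 1 < u) by lra.
  assert (Huu : u <= u * u) by nra.
  assert (E1 : D < c1 * (u * u)).
  { assert (D / c1 < u * u) by lra.
    apply (Rmult_lt_compat_l c1) in H; [|lra]. field_simplify in H; lra. }
  assert (E2 : D < c2 * (u * u)).
  { assert (D / c2 < u * u) by lra.
    apply (Rmult_lt_compat_l c2) in H; [|lra]. field_simplify in H; lra. }
  assert (E3 : k1 * D < c3 * (u * u)).
  { assert (k1 * D / c3 < u * u) by lra.
    apply (Rmult_lt_compat_l c3) in H; [|lra]. field_simplify in H; lra. }
  assert (Habs : - Rabs (pp - pm) <= pp - pm <= Rabs (pp - pm)).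
  { split; [|apply Rle_abs]. pose proof (Rle_abs (-(pp-pm))). rewrite Rabs_Ropp in H. lra. }
  assert (HR : (rp - rm) * (pp - pm) <= D) by (unfold D; nra).
  assert (HR' : - D <= (rp - rm) * (pp - pm)) by (unfold D; nra).
  assert (HB : BB rm rp pm pp vm vp = c1 * (u * u) - (rp - rm) * (pp - pm)).
  { unfold BB, c1, u. simpl. ring. }
  split; [rewrite HB; lra|split].
  - assert (Eq : vm - mu0 rm rp pm pp r1 vm vp
       = (rp * u - sqrt (BB rm rp pm pp vm vp * k0)) / (rp - rm)).
    { unfold mu0, AA, RR, u, uu, k0. field. lra. }
    rewrite Eq. apply Rdiv_lt_0_compat; [|lra].
    assert (sqrt (BB rm rp pm pp vm vp * k0) < rp * u); [|lra].
    apply sqrt_lt_helper; [nra|]. rewrite HB.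
    unfold c2 in E2. unfold c1. nra.
  - assert (Eq : mu1 rm rp pm pp r1 vm vp - vp
       = (sqrt (BB rm rp pm pp vm vp * k1) - rm * u) / (rp - rm)).
    { unfold mu1, AA, RR, u, uu, k1. field. lra. }
    rewrite Eq. apply Rdiv_lt_0_compat; [|lra].
    assert (rm * u < sqrt (BB rm rp pm pp vm vp * k1)); [|lra].
    apply sqrt_gt_helper; [nra|]. rewrite HB.
    unfold c3 in E3. unfold c1. nra.
Qed.
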